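(* Let $X,Y$ be finite sets and consider $\ell^\infty(X)\subseteq B(\ell^2(X))$, $\ell^\infty(Y)\subseteq B(\ell^2(Y))$ acting diagonally. For a multi-relation $R\subseteq X\times X\times Y$ put $V_R=\mathrm{span}\{e_{x_1x_2}\otimes e_{yy}:(x_1,x_2,y)\in R\}\subseteq B(\ell^2(X))\otimes\ell^\infty(Y)$, and for a quantum multi-relation $V$ on $(\ell^\infty(X),\ell^\infty(Y))$ put $R_V=\{(x_1,x_2,y):\exists\,T\in V\text{ with }\langle e_{x_1}\otimes e_y,T(e_{x_2}\otimes e_y)\rangle\ne0\}$. Then $V_R$ is a quantum multi-relation, $R_V$ is a multi-relation, and the assignments $R\mapsto V_R$ and $V\mapsto R_V$ are mutually inverse bijections between multi-relations on $(X,Y)$ and quantum multi-relations on $(\ell^\infty(X),\ell^\infty(Y))$.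
   Context: $\{e_x\}$ is the standard basis of $\ell^2(X)$ and $e_{x_1x_2}$ the matrix units. A multi-relation on a pair of finite sets $(X,Y)$ is a subset $R\subseteq X\times X\times Y$. For finite-dimensional von Neumann algebras $M\subseteq B(H)$, $N\subseteq B(K)$, a quantum multi-relation (multigraph) on $(M,N)$ is a linear subspace $V\subseteq B(H\otimes K)$ such that (1) $V\subseteq B(H)\otimes N$; (2) $V$ is an $(M'\otimes1)$–$(M'\otimes1)$ bimodule, where $M'$ is the commutant of $M$ in $B(H)$; (3) $(1\otimes Z(N))V\subseteq V$, where $Z(N)=N\cap N'$ is the center of $N$. *)

(* Defs.v *)
From HB Require Import structures.
From mathcomp Require Import all_boot all_order all_algebra.
From Stdlib Require Import ClassicalEpsilon.
Set Implicit Arguments. Unset Strict Implicit. Unset Printing Implicit Defensive.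
Import GRing.Theory Num.Theory.
Local Open Scope ring_scope.

(* For a finite set I, B(l^2(I)) is modelled as the C-vector space of matrices
   indexed by I x I, the entry at (i,j) being <e_i, A e_j>. *)
Definition Mat (C : numClosedFieldType) (I : finType) := {ffun (I * I)%type -> C^o}.

Section Ops.
Variable C : numClosedFieldType.

Definition opmul (I : finType) (A B : Mat C I) : Mat C I :=
  [ffun p => \sum_(k : I) A (p.1, k) * B (k, p.2)].

Definition opone (I : finType) : Mat C I := [ffun p => (p.1 == p.2)%:R].

Definition munit (I : finType) (i j : I) : Mat C I :=
  [ffun p => ((p.1 == i) && (p.2 == j))%:R].

(* tensor product of operators on l^2(X) (x) l^2(Y) = l^2(X * Y)%type *)
Definition optens (X Y : finType) (A : Mat C X) (B : Mat C Y) : Mat C (X * Y)%type :=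
  [ffun p => A (p.1.1, p.2.1) * B (p.1.2, p.2.2)].

Definition linfty (I : finType) : Mat C I -> Prop :=
  fun A => exists f : I -> C, A = [ffun p => if p.1 == p.2 then f p.1 else 0].

Definition fullB (I : finType) : Mat C I -> Prop := fun _ => True.

Definition commutant (I : finType) (M : Mat C I -> Prop) : Mat C I -> Prop :=
  fun A => forall m, M m -> opmul A m = opmul m A.

Definition center (I : finType) (N : Mat C I -> Prop) : Mat C I -> Prop :=
  fun A => N A /\ commutant N A.

Definition optensor_space (X Y : finType) (P : Mat C X -> Prop)
    (Q : Mat C Y -> Prop) : Mat C (X * Y)%type -> Prop :=
  fun T => exists (n : nat) (a : 'I_n -> Mat C X) (b : 'I_n -> Mat C Y),
    (forall i, P (a i)) /\ (forall i, Q (b i)) /\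
    T = \sum_(i < n) optens (a i) (b i).

Definition quantum_multirel (X Y : finType) (M : Mat C X -> Prop)
    (N : Mat C Y -> Prop) (V : {vspace Mat C (X * Y)%type}) : Prop :=
  [/\ (forall T, T \in V -> optensor_space (@fullB X) N T),
      (forall a T, commutant M a -> T \in V ->
          opmul (optens a (opone Y)) T \in V),
      (forall a T, commutant M a -> T \in V ->
          opmul T (optens a (opone Y)) \in V)
    & (forall z T, center N z -> T \in V ->
          opmul (optens (opone X) z) T \in V)].

Definition VR (X Y : finType) (R : {set X * X * Y}) : {vspace Mat C (X * Y)%type} :=
  <<[seq optens (munit r.1.1 r.1.2) (munit r.2 r.2) | r <- enum R]>>%VS.

End Ops.

Definition propb (P : Prop) : bool :=
  if excluded_middle_informative P then true else false.

Definition RV (C : numClosedFieldType) (X Y : finType)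
    (V : {vspace Mat C (X * Y)%type}) : {set X * X * Y} :=
  [set r : X * X * Y | propb (exists2 T, T \in V &
      T ((r.1.1, r.2), (r.1.2, r.2)) != 0)].

(* Main.v *)
Require Import Defs.
From HB Require Import structures.
From mathcomp Require Import all_boot all_order all_algebra.
From Stdlib Require Import ClassicalEpsilon.
Set Implicit Arguments. Unset Strict Implicit. Unset Printing Implicit Defensive.
Import GRing.Theory Num.Theory.
Local Open Scope ring_scope.

Lemma propbP (P : Prop) : propb P = true <-> P.
Proof. by rewrite /propb; case: excluded_middle_informative. Qed.

Section S.
Variable C : numClosedFieldType.


Definition isdiag (I : finType) (A : Mat C I) := forall i j, i != j -> A (i, j) = 0.

Lemma opmul_diagl (I : finType) (A B : Mat C I) : isdiag A ->
  opmul A B = [ffun p => A (p.1, p.1) * B p].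
Proof.
move=> dA; apply/ffunP => -[i j]; rewrite !ffunE /= (bigD1 i) //= big1 ?addr0 //.
by move=> k ki; rewrite dA ?mul0r // eq_sym.
Qed.

Lemma opmul_diagr (I : finType) (A B : Mat C I) : isdiag A ->
  opmul B A = [ffun p => B p * A (p.2, p.2)].
Proof.
move=> dA; apply/ffunP => -[i j]; rewrite !ffunE /= (bigD1 j) //= big1 ?addr0 //.
by move=> k kj; rewrite dA ?mulr0.
Qed.

Lemma linfty_diag (I : finType) (A : Mat C I) : linfty A -> isdiag A.
Proof. by case=> f -> i j /negbTE ij; rewrite ffunE /= ij. Qed.

Lemma diag_linfty (I : finType) (A : Mat C I) : isdiag A -> linfty A.
Proof.
move=> dA; exists (fun i => A (i, i)); apply/ffunP => -[i j]; rewrite ffunE /=.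
by case: eqP => [->//|/eqP]; apply: dA.
Qed.

Lemma diag_commutant (I : finType) (A : Mat C I) : isdiag A -> commutant (@linfty C I) A.
Proof.
move=> dA m /linfty_diag dm; rewrite opmul_diagl // opmul_diagr //.
apply/ffunP => -[i j]; rewrite !ffunE /=.
case: (eqVneq i j) => [->|ij]; first by rewrite mulrC.
by rewrite dm // mulr0 mul0r.
Qed.

Lemma munit_diag (I : finType) (j : I) : isdiag (munit C j j).
Proof. by move=> a b ab; rewrite ffunE /=; case: (eqVneq a j) => [e|] //=; case: (eqVneq b j) => [e'|] //=; rewrite e e' eqxx in ab. Qed.

Lemma commutant_diag (I : finType) (A : Mat C I) : commutant (@linfty C I) A -> isdiag A.
Proof.
move=> cA i j ij.
have dm := munit_diag j.
have := cA _ (diag_linfty dm); rewrite opmul_diagr // opmul_diagl // => /ffunP /(_ (i, j)).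
by rewrite !ffunE /= !eqxx (negbTE ij) /= mulr1 mul0r.
Qed.

Lemma optens_diag (X Y : finType) (a : Mat C X) (b : Mat C Y) : isdiag a -> isdiag b ->
  isdiag (optens a b).
Proof.
move=> da db [x1 y1] [x2 y2] ne; rewrite ffunE /=.
case: (eqVneq x1 x2) => [e|n]; last by rewrite da // mul0r.
case: (eqVneq y1 y2) => [e'|n]; last by rewrite db // mulr0.
by rewrite e e' eqxx in ne.
Qed.

Lemma opone_diag (I : finType) : isdiag (opone C I).
Proof. by move=> i j /negbTE ij; rewrite ffunE /= ij. Qed.


End S.

Section S2.
Variables (C : numClosedFieldType) (X Y : finType).
Implicit Types (R : {set X * X * Y}) (T : Mat C (X * Y)%type).

Definition gen (r : X * X * Y) : Mat C (X * Y)%type :=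
  optens (munit C r.1.1 r.1.2) (munit C r.2 r.2).
Definition qq (r : X * X * Y) : (X * Y) * (X * Y) := ((r.1.1, r.2), (r.1.2, r.2)).
Definition goodp R (p : (X * Y) * (X * Y)) :=
  ((p.1.1, p.2.1, p.1.2) \in R) && (p.1.2 == p.2.2).

Lemma genE r p : gen r p = (p == qq r)%:R.
Proof.
case: p => [[a b] [c d]]; case: r => [[x1 x2] y]; rewrite !ffunE /= /qq /=.
rewrite !xpair_eqE.
by case: (a == x1); case: (c == x2); case: (b == y); case: (d == y); rewrite /= ?mulr1 ?mulr0 ?mul0r.
Qed.

Lemma qq_good R r : r \in R -> goodp R (qq r).
Proof. by case: r => [[x1 x2] y] rR; rewrite /goodp /= eqxx andbT. Qed.

Lemma gen_in R r : r \in R -> gen r \in VR C R.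
Proof. by move=> rR; apply: memv_span; apply: map_f; rewrite mem_enum. Qed.

Lemma VR_decomp R T : (forall p, T p != 0 -> goodp R p) ->
  T = \sum_(r in R) T (qq r) *: gen r.
Proof.
move=> H.
  apply/ffunP => p; rewrite sum_ffunE.
  have [gp|ngp] := boolP (goodp R p).
    move: gp; case: p => [[a b] [c d]]; rewrite /goodp /= => /andP [abc /eqP <-].
    rewrite (bigD1 (a, c, b)) //= big1 ?addr0.
      rewrite ffunE genE /qq /= eqxx.
      by apply: esym; apply: mulr1.
    move=> r /andP [_ ne]; rewrite ffunE genE; case: eqP => [e|]; last by rewrite scaler0.
    case: r ne e => [[x1 x2] y] /= ne; rewrite /qq /= => -[e1 e2 e3 _].
    by rewrite -e1 -e2 -e3 eqxx in ne.
  have -> : T p = 0 by apply/eqP; apply: contraNT ngp; apply: H.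
  rewrite big1 // => r rR; rewrite ffunE genE; case: eqP => [e|]; last by rewrite scaler0.
  by rewrite e qq_good in ngp.
Qed.

Lemma memVR R T : T \in VR C R <-> (forall p, T p != 0 -> goodp R p).
Proof.
split.
  move=> TV p; rewrite /VR in TV.
  pose s := in_tuple [seq gen r | r <- enum R].
  have := @coord_span _ _ _ s T TV => ->.
  rewrite sum_ffunE => nz; apply/negPn/negP => ng; move: nz; rewrite big1 ?eqxx // => i _.
  have : s`_i \in s by rewrite mem_nth // size_tuple.
  case/mapP => r; rewrite mem_enum => rR ->.
  rewrite ffunE genE; case: eqP => [e|]; last by rewrite scaler0.
  by rewrite e qq_good in ng.
move=> H; rewrite (VR_decomp H).
by apply: memv_suml => r rR; apply: memvZ; apply: gen_in.
Qed.

End S2.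

Section S3.
Variables (C : numClosedFieldType) (X Y : finType).
Implicit Types (R : {set X * X * Y}) (T : Mat C (X * Y)%type).

Lemma mulL (a : Mat C X) T : isdiag a ->
  opmul (optens a (opone C Y)) T = [ffun p => a (p.1.1, p.1.1) * T p].
Proof.
move=> da; rewrite opmul_diagl; last by apply: optens_diag => //; apply: opone_diag.
by apply/ffunP => p; rewrite !ffunE /= eqxx mulr1.
Qed.

Lemma mulR (a : Mat C X) T : isdiag a ->
  opmul T (optens a (opone C Y)) = [ffun p => T p * a (p.2.1, p.2.1)].
Proof.
move=> da; rewrite opmul_diagr; last by apply: optens_diag => //; apply: opone_diag.
by apply/ffunP => p; rewrite !ffunE /= eqxx mulr1.
Qed.

Lemma mulZ (z : Mat C Y) T : isdiag z ->
  opmul (optens (opone C X) z) T = [ffun p => z (p.1.2, p.1.2) * T p].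
Proof.
move=> dz; rewrite opmul_diagl; last by apply: optens_diag => //; apply: opone_diag.
by apply/ffunP => p; rewrite !ffunE /= eqxx mul1r.
Qed.

Lemma VR_supp R T (S : Mat C (X * Y)%type) : T \in VR C R ->
  (forall p, S p != 0 -> T p != 0) -> S \in VR C R.
Proof.
move=> /memVR H HS; apply/memVR => p /HS; exact: H.
Qed.

Lemma optensZ (c : C) (a : Mat C X) (b : Mat C Y) :
  optens (c *: a) b = c *: optens a b.
Proof. by apply/ffunP => p; rewrite !ffunE; apply: esym; apply: mulrA. Qed.

End S3.

Theorem proposition4p2 (C : numClosedFieldType) (X Y : finType) :
  [/\ (forall R : {set X * X * Y},
         quantum_multirel (@linfty C X) (@linfty C Y) (VR C R)),
      (forall R : {set X * X * Y}, RV (VR C R) = R)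
    & (forall V : {vspace Mat C (X * Y)%type},
         quantum_multirel (@linfty C X) (@linfty C Y) V -> VR C (RV V) = V)].
Proof.
split.
- move=> R; split.
  + move=> T TV; have H := (memVR _ _).1 TV.
    rewrite (VR_decomp H) big_enum_val.
    exists #|R|, (fun i => T (qq (enum_val i)) *: munit C (enum_val i).1.1 (enum_val i).1.2),
      (fun i => munit C (enum_val i).2 (enum_val i).2).
    split => //; split; first by move=> i; apply: diag_linfty; apply: munit_diag.
    by apply: eq_bigr => i _; rewrite optensZ.
  + move=> a T /commutant_diag da TV; apply: VR_supp TV _ => p.
    by rewrite mulL // ffunE; apply: contraNneq => ->; rewrite mulr0.
  + move=> a T /commutant_diag da TV; apply: VR_supp TV _ => p.
    by rewrite mulR // ffunE; apply: contraNneq => ->; rewrite mul0r.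
  + move=> z T [/linfty_diag dz _] TV; apply: VR_supp TV _ => p.
    by rewrite mulZ // ffunE; apply: contraNneq => ->; rewrite mulr0.
- move=> R; apply/setP => r; rewrite inE; apply/idP/idP.
  + move/propbP => [T TV nz]; have := (memVR _ _).1 TV _ nz.
    by case: r nz => [[x1 x2] y] _; rewrite /goodp /= => /andP [].
  + move=> rR; apply/propbP; exists (gen C r); first exact: gen_in.
    by rewrite (genE _ _ (qq r)) eqxx oner_neq0.
- move=> V [H1 H2 H3 H4].
  have bd : forall T, T \in V -> forall p, T p != 0 -> p.1.2 = p.2.2.
    move=> T /H1 [n [a [b [_ [hb ->]]]]] p; rewrite sum_ffunE => nz; apply/eqP.
    apply: contraNT nz => ne; rewrite big1 // => i _.
    by rewrite ffunE (linfty_diag (hb i)) ?mulr0.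
  apply/eqP; rewrite eqEsubv; apply/andP; split.
  + apply/span_subvP => g /mapP [r]; rewrite mem_enum inE => /propbP [T TV nz] ->.
    have dg := @munit_diag C.
    pose S := opmul (optens (opone C X) (munit C r.2 r.2))
      (opmul (optens (munit C r.1.1 r.1.1) (opone C Y))
        (opmul T (optens (munit C r.1.2 r.1.2) (opone C Y)))).
    have SV : S \in V.
      apply: H4; first by split; [apply: diag_linfty | apply: diag_commutant].
      apply: H2; first exact: diag_commutant.
      by apply: H3 => //; apply: diag_commutant.
    have ES : S = T (qq r) *: gen C r.
      rewrite /S mulR // mulL // mulZ //; apply/ffunP => p.
      rewrite [RHS]ffunE genE !ffunE.
      clear SV S; case: r nz => [[x1 x2] y] /= nz.
      case: p => [[a b] [c d]] /=; rewrite /qq /= !xpair_eqE !andbb.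
      case: (eqVneq a x1) => [->|na]; last by rewrite /= ?mul0r ?mulr0 ?scaler0.
      case: (eqVneq b y) => [->|nb]; last by rewrite /= ?mul0r ?mulr0 ?scaler0 ?andbF.
      case: (eqVneq c x2) => [->|nc]; last by rewrite /= ?mul0r ?mulr0 ?scaler0 ?andbF.
      case: (eqVneq d y) => [->|nd].
        by rewrite /= !mul1r mulr1; apply: esym; apply: mulr1.
      have -> : T (x1, y, (x2, d)) = 0.
        by apply/eqP; apply: contraNT nd => /(bd _ TV) /= ->.
      by rewrite /= !mul0r !mulr0 scaler0.
    have -> : optens (munit C r.1.1 r.1.2) (munit C r.2 r.2) = (T (qq r))^-1 *: S.
      by rewrite ES scalerA mulVf // scale1r.
    exact: memvZ.
  + apply/subvP => T TV; apply/memVR => p nz; rewrite /goodp.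
    have e := bd T TV p nz; rewrite e eqxx andbT inE; apply/propbP; exists T => //.
    by case: p nz e => [[a b] [c d]] /= nz e; rewrite e in nz.
Qed.
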